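(* There exists a sequence $\{u_n\}_{n\ge1}\subset\mathscr{X}_1$ which separates the points of $\mathbb{M}^{ac}$ (and hence of $\mathscr{P}^{ac}$), i.e. for any $\mu\neq\nu$ in $\mathbb{M}^{ac}$ there is $n$ with $u_n(\mu)\neq u_n(\nu)$.
   Context: Let $(M,\rho)$ be a Polish space and $\lambda\neq0$ a $\sigma$-finite Radon measure on $M$. $\mathbb{M}$ is the set of finite Borel measures on $M$, $\mathbb{M}^{ac}=\{\mu\in\mathbb{M}:\mu\ll\lambda\}$, $\mathscr{P}^{ac}$ the probability measures in $\mathbb{M}^{ac}$. $\mathscr{X}$ is the class of functions $u(\mu)=g(\mu(f_1),\dots,\mu(f_n))$ on $\mathbb{M}$ with $n\in\mathbb{N}$, $f_i\in C_b(M)$, $g\in C^1_b(\mathbb{R}^n)$, with extrinsic derivative $D^Eu(\mu)(x)=\sum_i\partial_ig(\mu(f_1),\dots,\mu(f_n))f_i(x)$. $\mathscr{X}_1=\{u\in\mathscr{X}:\sup_{\mu\in\mathbb{M}^{ac}}\|D^Eu(\mu)\|_{L^1(\mu)}<\infty\}$. *)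

(* Defs.v *)
From HB Require Import structures.
From mathcomp Require Import all_boot all_order all_algebra.
From mathcomp Require Import all_classical all_reals all_analysis.
Set Implicit Arguments. Unset Strict Implicit. Unset Printing Implicit Defensive.
Import Order.TTheory GRing.Theory Num.Theory.
Import numFieldNormedType.Exports.
Local Open Scope classical_set_scope.
Local Open Scope ring_scope.

Definition Borel (M : ptopologicalType) : measurableType (sigma_display (@open M)) :=
  g_sigma_algebraType (@open M).

(* Polish space: (complete) metric space -- complete pseudometric that is
   Hausdorff -- which is separable (has a countable dense subset). *)
Definition polish_hyp (R : realType) (M : completePseudoMetricType R) : Prop :=
  hausdorff_space M /\ exists D : set M, countable D /\ dense D.

Definition radon (M : ptopologicalType) (R : realType)
  (lam : {measure set (Borel M) -> \bar R}) : Prop :=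
  (forall x : M, exists U : set M, open U /\ U x /\ (lam U < +oo)%E) /\
  (forall B : set (Borel M), measurable B ->
     lam B = ereal_sup [set lam K | K in [set K : set M | compact K /\ K `<=` B]]).

Definition Cb (M : ptopologicalType) (R : realType) (f : M -> R) : Prop :=
  continuous f /\ exists C : R, forall x, `|f x| <= C.

Definition unitv (R : realType) (n : nat) (i : 'I_n) : 'rV[R]_n := delta_mx 0 i.

Definition partial (R : realType) (n : nat) (g : 'rV[R]_n -> R) (i : 'I_n)
  (x : 'rV[R]_n) : R := derive g x (unitv R i).

Definition C1b (R : realType) (n : nat) (g : 'rV[R]_n -> R) : Prop :=
  continuous g /\ (exists C : R, forall x, `|g x| <= C) /\
  forall i : 'I_n,
    (forall x, derivable g x (unitv R i)) /\
    continuous (partial g i) /\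
    (exists C : R, forall x, `|partial g i x| <= C).

Definition mint (M : ptopologicalType) (R : realType)
  (mu : {measure set (Borel M) -> \bar R}) (f : M -> R) : R :=
  Rintegral mu setT (f : Borel M -> R).

(* Data of a cylinder function u(mu) = g(mu(f_1),...,mu(f_n)). *)
Record cyl (M : ptopologicalType) (R : realType) := Cyl {
  cyl_n : nat;
  cyl_f : 'I_cyl_n -> M -> R;
  cyl_g : 'rV[R]_cyl_n -> R }.
Arguments cyl_n {M R} c.
Arguments cyl_f {M R} c i x.
Arguments cyl_g {M R} c x.

Definition cyl_args (M : ptopologicalType) (R : realType) (u : cyl M R)
  (mu : {measure set (Borel M) -> \bar R}) : 'rV[R]_(cyl_n u) :=
  \row_i mint mu (cyl_f u i).

Definition cyl_eval (M : ptopologicalType) (R : realType) (u : cyl M R)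
  (mu : {measure set (Borel M) -> \bar R}) : R := cyl_g u (cyl_args u mu).

Definition in_X (M : ptopologicalType) (R : realType) (u : cyl M R) : Prop :=
  (forall i, Cb (cyl_f u i)) /\ C1b (cyl_g u).

Definition DE (M : ptopologicalType) (R : realType) (u : cyl M R)
  (mu : {measure set (Borel M) -> \bar R}) (x : M) : R :=
  \sum_(i < cyl_n u) partial (cyl_g u) i (cyl_args u mu) * cyl_f u i x.

Definition in_Mac (M : ptopologicalType) (R : realType)
  (lam : {measure set (Borel M) -> \bar R})
  (mu : {finite_measure set (Borel M) -> \bar R}) : Prop := mu `<< lam.

Definition in_X1 (M : ptopologicalType) (R : realType)
  (lam : {measure set (Borel M) -> \bar R}) (u : cyl M R) : Prop :=
  in_X u /\
  exists C : R, forall mu : {finite_measure set (Borel M) -> \bar R},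
    in_Mac lam mu ->
    (\int[mu]_(x in setT) (`|DE u mu x|)%:E <= C%:E)%E.

Definition meas_eq (M : ptopologicalType) (R : realType)
  (mu nu : set (Borel M) -> \bar R) : Prop :=
  forall A : set (Borel M), measurable A -> mu A = nu A.

(* Main.v *)
Require Import Defs.
From HB Require Import structures.
From mathcomp Require Import all_boot all_order all_algebra.
From mathcomp Require Import all_classical all_reals all_analysis.
From mathcomp Require Import lra.
Import Order.TTheory GRing.Theory Num.Theory.
Import numFieldNormedType.Exports.
Local Open Scope classical_set_scope.
Local Open Scope ring_scope.

Lemma edist_inf1 (R : realType) (M : completePseudoMetricType R) (a z : M) :
  edist_inf [set a] z = edist (z, a).
Proof. by rewrite /edist_inf image_set1 ereal_inf1. Qed.

Lemma open_edist_lt (R : realType) (M : completePseudoMetricType R) (A : set M)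
  (c : \bar R) : open [set x | (edist_inf A x < c)%E].
Proof.
have -> : [set x | (edist_inf A x < c)%E] = edist_inf A @^-1` [set y | (y < c)%E] by [].
apply: open_comp; last exact: open_ereal_lt_ereal.
by move=> x _; exact: edist_inf_continuous.
Qed.

Lemma closed_edist_ge (R : realType) (M : completePseudoMetricType R) (A : set M)
  (c : \bar R) : closed [set x | (c <= edist_inf A x)%E].
Proof.
have -> : [set x | (c <= edist_inf A x)%E] = edist_inf A @^-1` [set y | (c <= y)%E] by [].
apply: closed_comp; last exact: closed_ereal_le_ereal.
by move=> x _; exact: edist_inf_continuous.
Qed.

Lemma edist_inf_pos (R : realType) (M : completePseudoMetricType R) (V : set M) (x : M) :
  open V -> V x -> (0 < edist_inf (~` V) x)%E.
Proof.
move=> oV Vx.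
have : nbhs x V by apply: open_nbhs_nbhs; split.
move=> /nbhs_ballP [e e0 bV].
apply: (@lt_le_trans _ _ e%:E); first by rewrite lte_fin.
apply: le_ereal_inf_tmp => _ [a nVa <-].
rewrite leNgt; apply/negP => /edist_lt_ball /= /bV.
exact: nVa.
Qed.

Definition Bset (R : realType) (M : completePseudoMetricType R) (V : set M) (n : nat) :=
  [set x | ((n.+1%:R : R)^-1%:E <= edist_inf (~` V) x)%E].
Arguments Bset {R M}.

Definition phi (R : realType) (M : completePseudoMetricType R) (V : set M) (n : nat) : M -> R :=
  Urysohn (~` V) (Bset V n).
Arguments phi {R M}.

Lemma phi_props (R : realType) (M : completePseudoMetricType R) (V : set M) (n : nat) :
  open V ->
  [/\ continuous (phi V n), (forall x, 0 <= phi V n x <= 1),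
      (forall x, ~ V x -> phi V n x = 0) & (forall x, Bset V n x -> phi V n x = 1)].
Proof.
move=> oV.
have sep : uniform_separator (~` V) (Bset V n).
  apply: (proj1 (@normal_separatorP R M) (@pseudometric_normal R M)).
  - exact: open_closedC.
  - exact: closed_edist_ge.
  - apply/seteqP; split => // x [nVx]; rewrite /Bset /= edist_inf0 //.
    by rewrite lee_fin leNgt invr_gt0 ltr0Sn.
split.
- exact: Urysohn_continuous.
- move=> x; have := @Urysohn_range M R (~` V) (Bset V n) (phi V n x) (ex_intro2 _ _ x I erefl).
  by rewrite /= in_itv.
- by move=> x nVx; apply: (Urysohn_sub0 sep); exists x.
- by move=> x Bx; apply: (Urysohn_sub1 sep); exists x.
Qed.

Arguments phi_props {R M V}.
Arguments edist_inf_pos {R M V x}.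

Lemma phi_cvg (R : realType) (M : completePseudoMetricType R) (V : set M) (x : M) :
  open V -> phi V n x @[n --> \oo] --> (\1_V x : R).
Proof.
move=> oV; apply: cvg_near_cst.
have [Vx|nVx] := pselect (V x); last first.
  by apply: nearW => n; rewrite indicE memNset //; have [] := phi_props n oV; auto.
rewrite indicE mem_set //.
suff : \forall n \near \oo, Bset V n x.
  by apply: filterS => n Bn; have [_ _ _ ->] := phi_props n oV.
have := edist_inf_pos oV Vx.
have [E|fin] := eqVneq (edist_inf (~` V) x) +oo%E.
  by move=> _; apply: nearW => n; rewrite /Bset /= E leey.
have fin' : edist_inf (~` V) x \is a fin_num.
  by rewrite fin_numE fin andbT.
rewrite -(fineK fin') lte_fin => r0.
have := near_infty_natSinv_lt (PosNum r0).
apply: filterS => n /= nr; rewrite /Bset /= -(fineK fin') lee_fin.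
exact: ltW.
Qed.

Lemma cont_measurable (R : realType) (T : ptopologicalType) (f : T -> R) :
  continuous f -> measurable_fun [set: Borel T] f.
Proof.
move=> /continuousP cf; apply: (measurability _ (measurable_realfun.RGenOpens.measurableE R)).
move=> _ [_ [a [b ->] <-]]; rewrite setTI; apply: sub_sigma_algebra.
exact/cf/interval_open.
Qed.

Lemma mint_integral (R : realType) (T : ptopologicalType)
  (mu : {finite_measure set (Borel T) -> \bar R}) (f : T -> R) :
  continuous f -> (forall x, 0 <= f x <= 1) ->
  (\int[mu]_(x in setT) (f x)%:E = (mint mu f)%:E)%E /\ 0 <= mint mu f.
Proof.
move=> cf f01.
have f0 x : 0 <= f x by have /andP[] := f01 x.
have f1 x : f x <= 1 by have /andP[] := f01 x.
have mf : measurable_fun [set: Borel T] f by exact: cont_measurable.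
have ge0 : (0 <= \int[mu]_(x in setT) (f x)%:E)%E.
  by apply: integral_ge0 => x _; rewrite lee_fin; exact: f0.
have le : (\int[mu]_(x in setT) (f x)%:E <= \int[mu]_(x in setT) (cst 1%E x))%E.
  apply: ge0_le_integral => //.
  all: try (move=> x _; rewrite lee_fin; by [apply: f0|apply: f1]).
  - exact: ((measurable_realfun.measurable_EFinP _ _).2 mf).
have fin : (\int[mu]_(x in setT) (f x)%:E)%E \is a fin_num.
  rewrite ge0_fin_numE //; apply: (le_lt_trans le).
  rewrite integral_cst // mul1e.
  have := @fin_num_measure _ _ _ mu setT measurableT.
  by rewrite ge0_fin_numE.
rewrite /mint /Rintegral fineK //; split => //.
by rewrite fine_ge0.
Qed.

Arguments cont_measurable {R T f}.
Arguments mint_integral {R T mu f}.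

Lemma lim_mint (R : realType) (M : completePseudoMetricType R)
  (mu : {finite_measure set (Borel M) -> \bar R}) (V : set M) :
  open V -> (mint mu (phi V n))%:E @[n --> \oo] --> mu V.
Proof.
move=> oV.
have mV : measurable (V : set (Borel M)) by apply: sub_sigma_algebra.
pose f_ := fun n => (EFin \o (phi V n : Borel M -> R)).
pose f := EFin \o (\1_V : Borel M -> R).
have cphi n : continuous (phi V n) by have [] := phi_props n oV.
have mf_ := fun n => (measurable_realfun.measurable_EFinP [set: Borel M] (phi V n : Borel M -> R)).2 (cont_measurable (cphi n)).
have mf := (measurable_realfun.measurable_EFinP [set: Borel M] (\1_V : Borel M -> R)).2 (@measurable_realfun.measurable_indic _ (Borel M) R setT V mV).
have ff : {ae mu, forall x, setT x -> f_ ^~ x @ \oo --> f x}.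
  apply: aeW => x _; apply/fine_cvgP; split; first exact: nearW.
  exact: phi_cvg.
have ig : mu.-integrable setT (EFin \o cst (1:R)).
  exact: finite_measure_integrable_cst.
have fg : {ae mu, forall x n, setT x -> (`|f_ n x| <= (EFin \o cst (1%R:R)) x)%E}.
  apply: aeW => x n _; rewrite /f_ /= lee_fin.
  have [_ h _ _] := phi_props n oV; have /andP[h0 h1] := h x.
  by rewrite ger0_norm.
have [_ _ h] := @dominated_convergence _ _ R mu setT measurableT f_ f _ mf_ mf ff ig fg.
move: h; rewrite /f integral_indic // setIT.
apply: cvg_trans; apply: near_eq_cvg; apply: nearW => n /=.
have [_ h _ _] := phi_props n oV.
by have [<- _] := @mint_integral R M mu (phi V n) (cphi n) h.
Qed.

Lemma meas_open_eq (R : realType) (M : completePseudoMetricType R)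
  (mu nu : {finite_measure set (Borel M) -> \bar R}) (V : set M) :
  open V -> (forall n, mint mu (phi V n) = mint nu (phi V n)) -> mu V = nu V.
Proof.
move=> oV H.
have h1 := @lim_mint R M mu V oV; have h2 := @lim_mint R M nu V oV.
have E : (fun n => (mint mu (phi V n))%:E) = (fun n => (mint nu (phi V n))%:E).
  by apply/funext => n; rewrite H.
rewrite E in h1.
exact: (cvg_unique _ h1 h2).
Qed.

Definition Ob (R : realType) (M : completePseudoMetricType R) (e : nat -> M)
  (p : nat * nat) : set M :=
  [set x | (edist_inf [set e p.1] x < ((p.2.+1%:R : R)^-1)%:E)%E].
Arguments Ob {R M}.

Fixpoint Vs (R : realType) (M : completePseudoMetricType R) (e : nat -> M)
  (s : seq (nat * nat)) : set M :=
  match s with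
  | [::] => setT
  | p :: s' => Ob e p `&` Vs R M e s'
  end.
Arguments Vs {R M}.

Lemma Vs_open (R : realType) (M : completePseudoMetricType R) (e : nat -> M) s :
  open (Vs e s).
Proof.
elim: s => [|p s IH] /=; first exact: openT.
apply: openI => //; exact: open_edist_lt.
Qed.

Lemma Vs_cat (R : realType) (M : completePseudoMetricType R) (e : nat -> M) s t :
  Vs e (s ++ t) = Vs e s `&` Vs e t.
Proof.
elim: s => [|p s IH] /=; first by rewrite setTI.
by rewrite IH setIA.
Qed.

Definition Fk (R : realType) (M : completePseudoMetricType R) (e : nat -> M)
  (k : nat) : M -> R :=
  match @choice.unpickle (seq (nat * nat) * nat)%type k with
  | Some (s, n) => phi (Vs e s) n
  | None => fun _ => 0
  end.

Lemma open_cover (R : realType) (M : completePseudoMetricType R) (D : set M)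
  (e : nat -> M) : dense D -> D `<=` range e ->
  forall U, open U -> forall x, U x -> exists p, Ob e p x /\ Ob e p `<=` U.
Proof.
move=> dD De U oU x Ux.
have : nbhs x U by apply: open_nbhs_nbhs; split.
move=> /nbhs_ballP [r r0 bU].
have r20 : 0 < r / 2 by rewrite divr_gt0.
have [N _ /(_ N)/(_ (leqnn _)) Nr] := near_infty_natSinv_lt (PosNum r20).
set c := (N.+1%:R : R)^-1 in Nr.
have c0 : 0 < c by rewrite invr_gt0 ltr0Sn.
have [y [W0y Dy]] : [set y | (edist_inf [set x] y < c%:E)%E] `&` D !=set0.
  apply: dD; last exact: open_edist_lt.
  by exists x; rewrite /= edist_inf1 edist_refl lte_fin.
have [j _ ejy] := De y Dy.
exists (j, N); split.
  by rewrite /Ob /= edist_inf1 edist_sym ejy -edist_inf1.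
move=> z; rewrite /Ob /= edist_inf1 => hz.
apply: bU; apply: (@edist_lt_ball R M r (x, z)) => /=.
apply: (le_lt_trans (edist_triangle x (e j) z)).
apply: (@lt_le_trans _ _ (c%:E + c%:E)%E).
  apply: lteD.
    by move: W0y; rewrite /= edist_inf1 edist_sym ejy.
  by rewrite edist_sym.
rewrite -EFinD lee_fin.
by move: Nr; rewrite /= => Nr'; lra.
Qed.

Arguments Fk {R M}.
Arguments Vs_open {R M}.
Arguments open_cover {R M D e} _ _ {U} _ {x}.

Lemma Fk_props (R : realType) (M : completePseudoMetricType R) (e : nat -> M) k :
  continuous (Fk e k) /\ (forall x, 0 <= Fk e k x <= 1).
Proof.
rewrite /Fk; case: choice.unpickle => [[s n]|].
  by have [? ? _ _] := phi_props n (Vs_open e s).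
split; first by move=> x; exact: cvg_cst.
by move=> x; rewrite lexx ler01.
Qed.

Lemma separation (R : realType) (M : completePseudoMetricType R) :
  polish_hyp M -> exists F : nat -> M -> R,
    (forall k, continuous (F k) /\ (forall x, 0 <= F k x <= 1)) /\
    forall mu nu : {finite_measure set (Borel M) -> \bar R},
      (forall k, mint mu (F k) = mint nu (F k)) -> meas_eq mu nu.
Proof.
case=> _ [D [cD dD]].
have /pcard_surjP [e sg] := cD.
have De : D `<=` range e by [].
exists (Fk e); split; first exact: Fk_props.
move=> mu nu H A mA.
pose G := range (Vs e).
have GO : forall U, open U -> <<s G >> U.
  move=> U oU.
  pose W k : set M := match @choice.unpickle (nat * nat)%type k with
    | Some p => if pselect (Ob e p `<=` U) then Vs e [:: p] else set0
    | None => set0 end.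
  have -> : U = \bigcup_k W k.
    apply/seteqP; split.
      move=> x Ux; have [p [Opx OpU]] := open_cover dD De oU Ux.
      exists (choice.pickle p) => //; rewrite /W choice.pickleK.
      by case: pselect => // _; split.
    move=> x [k _]; rewrite /W; case: choice.unpickle => // p.
    by case: pselect => // OU [/OU].
  apply: sigma_algebra_bigcup => k; rewrite /W.
  case: (choice.unpickle k) => [p|]; last exact: sigma_algebra0.
  case: (pselect (Ob e p `<=` U)) => [_|_] /=; last exact: sigma_algebra0.
  by apply: sub_sigma_algebra; exists [:: p].
have mG : @measurable _ (Borel M) = <<s G >>.
  apply/seteqP; split.
    by apply: smallest_sub => //; exact: smallest_sigma_algebra.
  apply: smallest_sub; first exact: (@sigma_algebra_measurable _ (Borel M)).
  by move=> _ [s _ <-]; apply: sub_sigma_algebra; exact: Vs_open.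
apply: (@measure_unique _ R (Borel M) G (fun _ => setT) mG _ _ _ mu nu) => //.
- by move=> _ _ [s _ <-] [t _ <-]; exists (s ++ t) => //; rewrite Vs_cat.
- by move=> _; exists [::].
- by rewrite bigcup_const.
- move=> _ [s _ <-]; apply: meas_open_eq; first exact: Vs_open.
  move=> n; have := H (choice.pickle (s, n)).
  by rewrite /Fk choice.pickleK.
- move=> _; have := @fin_num_measure _ _ _ mu setT measurableT.
  by rewrite ge0_fin_numE.
Qed.

Definition gat (R : realType) : 'rV[R]_1 -> R := fun x => atan (x ord0 ord0).

Lemma gat_shift (R : realType) (a : 'rV[R]_1) (h : R) :
  (gat R \o shift a) (h *: unitv R ord0) = (atan \o shift (a ord0 ord0)) (h *: 1).
Proof.
rewrite /gat /unitv /= !mxE /= mulr1. by congr atan; congr (_ + _); rewrite /GRing.scale /= mulr1. Qed.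

Lemma partial_gat (R : realType) (a : 'rV[R]_1) :
  derivable (gat R) a (unitv R ord0) /\
  partial (gat R) ord0 a = (1 + (a ord0 ord0) ^+ 2)^-1.
Proof.
have E : (fun h : R => h^-1 *: ((gat R \o shift a) (h *: unitv R ord0) - gat R a)) =
         (fun h : R => h^-1 *: ((atan \o shift (a ord0 ord0)) (h *: 1) - atan (a ord0 ord0))).
  by apply/funext => h; rewrite gat_shift.
split.
  rewrite /derivable E; exact: (@ex_derive _ _ _ _ _ _ _ (is_derive1_atan _)).
rewrite /partial /derive E; exact: (@derive_val _ _ _ _ _ _ _ (is_derive1_atan _)).
Qed.

Definition mkcyl (R : realType) (T : ptopologicalType) (f : T -> R) : cyl T R :=
  @Cyl T R 1 (fun _ => f) (gat R).
Arguments mkcyl {R T}.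
Arguments partial_gat {R}.

Lemma in_X1_mkcyl (R : realType) (T : ptopologicalType)
  (lam : {measure set (Borel T) -> \bar R}) (f : T -> R) :
  continuous f -> (forall x, 0 <= f x <= 1) -> in_X1 lam (mkcyl f).
Proof.
move=> cf f01.
have f0 x : 0 <= f x by have /andP[] := f01 x.
have f1 x : f x <= 1 by have /andP[] := f01 x.
have pE : forall i : 'I_1, partial (gat R) i = (fun x => (1 + (x ord0 ord0) ^+ 2)^-1).
  by move=> i; rewrite (ord1 i); apply/funext => x; case: (partial_gat x).
have pos y : 0 < 1 + y ^+ 2 :> R by rewrite ltr_pwDl // sqr_ge0.
split; first split.
- move=> i; split => //; exists 1 => x; rewrite ger0_norm //.
- split; first by move=> x; apply: continuous_comp; [exact: coord_continuous|exact: continuous_atan].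
  split.
    exists (pi / 2) => x; rewrite /gat ler_norml; apply/andP; split; apply: ltW.
      exact: atan_gtNpi2.
    exact: atan_ltpi2.
  move=> i; split; first by move=> x; rewrite (ord1 i); case: (partial_gat x).
  rewrite pE; split.
    move=> x; apply: (@continuous_comp _ _ _ (fun y : 'rV[R]_1 => y ord0 ord0) (fun y : R => (1 + y ^+ 2)^-1)).
      exact: coord_continuous.
    apply: cvgV; first by rewrite lt0r_neq0.
    apply: cvgD; first exact: cvg_cst.
    by apply: cvgM; exact: cvg_id.
  exists 1 => x; rewrite ger0_norm; last by rewrite invr_ge0 ltW.
  by rewrite invf_le1 // lerDl sqr_ge0.
exists 1 => mu _.
have [Ei a0] := @mint_integral R T mu f cf f01.
set a := mint mu f in Ei a0.
have DEE x : DE (mkcyl f) mu x = (1 + a ^+ 2)^-1 * f x.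
  by rewrite /DE big_ord1 pE /cyl_args mxE.
have c0 : 0 <= (1 + a ^+ 2)^-1 by rewrite invr_ge0 ltW.
under eq_integral do rewrite DEE ger0_norm ?mulr_ge0 // EFinM.
rewrite ge0_integralZl_EFin //; last 2 first.
- by move=> x _; rewrite lee_fin.
- apply/measurable_realfun.measurable_EFinP; exact: cont_measurable.
rewrite Ei -EFinM lee_fin.
rewrite mulrC -(@ler_pM2r _ (1 + a ^+ 2)) // mul1r -mulrA mulVf ?lt0r_neq0 // mulr1.
nra.
Qed.

Theorem lemma2p6 (R : realType) (M : completePseudoMetricType R)
  (lam : {measure set (Borel M) -> \bar R}) :
  polish_hyp M ->
  sigma_finite setT lam ->
  radon lam ->
  (exists A : set (Borel M), measurable A /\ lam A <> 0%E) ->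
  exists u : nat -> cyl M R,
    (forall k, in_X1 lam (u k)) /\
    (forall mu nu : {finite_measure set (Borel M) -> \bar R},
       in_Mac lam mu -> in_Mac lam nu -> ~ meas_eq mu nu ->
       exists k, cyl_eval (u k) mu <> cyl_eval (u k) nu).
Proof.
move=> pol _ _ _.
have [F [FP Fsep]] := @separation R M pol.
exists (fun k => mkcyl (F k)); split.
  by move=> k; have [cF hF] := FP k; exact: in_X1_mkcyl.
move=> mu nu _ _ neq; apply: contrapT => nex; apply: neq; apply: Fsep => k.
apply: (can_inj (@atanK R)).
case: (pselect (cyl_eval (mkcyl (F k)) mu = cyl_eval (mkcyl (F k)) nu)) => [E|ne].
  by move: E; rewrite /cyl_eval /cyl_args /= /gat !mxE.
by exfalso; apply: nex; exists k.
Qed.
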